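(* Let $E,F$ be Banach spaces, $a\in E$, $1\le p,q<\infty$, and let $f:E\rightarrow F$ be absolutely $(p;q)$-summing at $a$. Then for every sequence $(x_{j})_{j=1}^{\infty}\in l_{q}^{u}(E)$ one has $(f(a+x_{j})-f(a))_{j=1}^{\infty}\in l_{p}(F)$.
   Context: For a sequence $(x_j)$ in $E$, $\Vert(x_{j})_{j}\Vert_{w,q}:=\sup_{\varphi\in B_{E'}}(\sum_{j}|\varphi(x_{j})|^{q})^{1/q}$; $l_q^w(E)$ is the space of sequences with this quantity finite, and $l_{q}^{u}(E)$ is the subspace of those with $\lim_{m\to\infty}\Vert(x_{j})_{j=m}^{\infty}\Vert_{w,q}=0$ (unconditionally $q$-summable sequences). $l_p(F)$ is the space of sequences $(y_j)$ in $F$ with $\sum_j\Vert y_j\Vert^p<\infty$. An arbitrary mapping $f:E\to F$ is called absolutely $(p;q)$-summing at $a$ if there exist $M_a,\delta_a,r_a>0$ with $\sum_{j=1}^{k}\Vert f(a+x_{j})-f(a)\Vert^{p}\leq M_{a}\Vert(x_{j})_{j=1}^{k}\Vert_{w,q}^{r_{a}}$ for all $k$ and all $x_1,\dots,x_k\in E$ with $\Vert(x_{j})_{j=1}^{k}\Vert_{w,q}<\delta_{a}$. *)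

(* Defs.v *)
From HB Require Import structures.
From mathcomp Require Import all_boot all_order all_algebra.
From mathcomp Require Import all_classical all_reals all_analysis.
Set Implicit Arguments. Unset Strict Implicit. Unset Printing Implicit Defensive.
Import Order.TTheory GRing.Theory Num.Theory.
Import numFieldNormedType.Exports.
Local Open Scope classical_set_scope.
Local Open Scope ring_scope.

(* Closed unit ball B_{E'} of the (topological) dual of a real normed space E:
   linear functionals of operator norm <= 1 (such functionals are automatically
   continuous). *)
Definition dual_ball {R : realType} (E : normedModType R) : set (E -> R) :=
  [set phi | (forall x y : E, phi (x + y) = phi x + phi y) /\
             (forall (c : R) (x : E), phi (c *: x) = c * phi x) /\
             (forall x : E, `|phi x| <= `|x|)].

Definition weak_norm_fin {R : realType} (E : normedModType R) (q : R)
    (x : nat -> E) (k : nat) : \bar R :=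
  ereal_sup ((fun phi : E -> R =>
                ((powR (\sum_(j < k) powR `|phi (x j)| q) q^-1)%:E)%E)
             @` @dual_ball R E).

Definition weak_norm_tail {R : realType} (E : normedModType R) (q : R)
    (x : nat -> E) (m : nat) : \bar R :=
  ereal_sup ((fun phi : E -> R =>
                poweR (\sum_(m <= j <oo) ((powR `|phi (x j)| q)%:E))%E q^-1)
             @` @dual_ball R E).

Definition lqu {R : realType} (E : normedModType R) (q : R) : set (nat -> E) :=
  [set x | (weak_norm_tail q x 0 < +oo)%E /\
           weak_norm_tail q x m @[m --> \oo] --> 0%E].

Definition lp {R : realType} (F : normedModType R) (p : R) : set (nat -> F) :=
  [set y | (\sum_(0 <= j <oo) ((powR `|y j| p)%:E) < +oo)%E].

Definition abs_summing_at {R : realType} (E F : normedModType R) (p q : R)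
    (f : E -> F) (a : E) : Prop :=
  exists (M delta r : R), 0 < M /\ 0 < delta /\ 0 < r /\
    forall (k : nat) (x : nat -> E),
      (weak_norm_fin q x k < delta%:E)%E ->
      \sum_(j < k) powR `|f (a + x j) - f a| p
        <= M * powR (fine (weak_norm_fin q x k)) r.

(* Main.v *)
Require Import Defs.
From HB Require Import structures.
From mathcomp Require Import all_boot all_order all_algebra.
From mathcomp Require Import all_classical all_reals all_analysis.
Import Order.TTheory GRing.Theory Num.Theory.
Import numFieldNormedType.Exports.
Local Open Scope classical_set_scope.
Local Open Scope ring_scope.

Lemma reidx (T : Type) (idx : T) (op : T -> T -> T) (F : nat -> T) m n :
  \big[op/idx]_(m <= i < n + m) F i = \big[op/idx]_(i < n) F (i + m)%N.
Proof. by rewrite -{1}[m]add0n big_addn addnK big_mkord. Qed.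

Lemma shift_sum (R : realType) (g : nat -> R) m n :
  \sum_(0 <= j < (m + n)%N) g j = \sum_(0 <= j < m) g j + \sum_(j < n) g (j + m)%N.
Proof.
rewrite (big_cat_nat (leq0n m) (leq_addr n m)) /=; congr (_ + _).
by rewrite addnC reidx.
Qed.

Lemma fin_le_tail (R : realType) (E : normedModType R) (q : R) (hq : 1 <= q)
  (x : nat -> E) m k :
  (weak_norm_fin q (fun j => x (j + m)%N) k <= weak_norm_tail q x m)%E.
Proof.
apply: ge_ereal_sup => _ [phi Hphi <-].
apply: (@le_trans _ _ (poweR (\sum_(m <= j <oo) ((powR `|phi (x j)| q)%:E))%E q^-1)).
  rewrite -poweR_EFin; apply: gt0_ler_poweR.
  - by rewrite invr_ge0; apply: le_trans hq.
  - rewrite in_itv /= leey andbT lee_fin; apply: sumr_ge0 => i _; exact: powR_ge0.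
  - rewrite in_itv /= leey andbT; apply: nneseries_ge0 => i _ _; rewrite lee_fin; exact: powR_ge0.
  apply: le_trans (nneseries_lim_ge (k + m)%N _); last by move=> i _ _; rewrite lee_fin powR_ge0.
  by rewrite reidx sumEFin.
apply: ereal_sup_ubound; by exists phi.
Qed.

Lemma fin_ge0 (R : realType) (E : normedModType R) (q : R) (x : nat -> E) k :
  (0 <= weak_norm_fin q x k)%E.
Proof.
apply: le_trans (ereal_sup_ubound _); last first.
  exists (fun _ => 0) => //; split; first by move=> *; rewrite addr0.
  split; first by move=> *; rewrite mulr0.
  by move=> y; rewrite normr0.
by rewrite lee_fin powR_ge0.
Qed.

Theorem mainTheorem2 (R : realType) (E F : completeNormedModType R) (a : E)
    (p q : R) (hp : 1 <= p) (hq : 1 <= q) (f : E -> F) :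
  abs_summing_at p q f a ->
  forall x : nat -> E, lqu q x ->
    lp p (fun j => f (a + x j) - f a).
Proof.
move=> [M [delta [r [M0 [d0 [r0 HS]]]]]] x [_ Hlim].
have [m Hm] : exists m, (weak_norm_tail q x m < delta%:E)%E.
  have /fine_cvgP [Hfin Hf] := Hlim.
  have := @cvgr_lt _ _ _ _ _ _ Hf _ d0.
  move=> H; have H2 := filterI Hfin (H _).
  case: H2 => N _ HN; exists N; have [/= Hf1 Hf2] := HN N (leqnn N).
  by rewrite -(fineK Hf1) lte_fin.
set g := fun j => powR `|f (a + x j) - f a| p.
have Hb : forall n, \sum_(j < n) g (j + m)%N <= M * powR delta r.
  move=> n.
  have Hlt : (weak_norm_fin q (fun j => x (j + m)%N) n < delta%:E)%E.
    exact: le_lt_trans (@fin_le_tail _ _ q hq x m n) Hm.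
  apply: le_trans (HS n (fun j => x (j + m)%N) Hlt) _.
  have w0 := @fin_ge0 _ _ q (fun j => x (j + m)%N) n.
  move: Hlt w0; case: (weak_norm_fin q (fun j => x (j + m)%N) n) => // w.
  rewrite !lee_fin lte_fin /= => wd w0.
  rewrite ler_pM2l //; apply: ge0_ler_powR; first exact: ltW.
  - by rewrite nnegrE.
  - by rewrite nnegrE ltW.
  exact: ltW.
have Hg0 : forall j, 0 <= g j by move=> j; exact: powR_ge0.
change (\sum_(0 <= j <oo) (g j)%:E < +oo)%E.
have Hnd : forall n, (0 <= n)%N -> true -> (0 <= (g n)%:E)%E.
  by move=> n _ _; rewrite lee_fin.
move/ereal_nondecreasing_series/ereal_nondecreasing_cvgn/cvg_lim : Hnd => -> //.
apply: (@le_lt_trans _ _ ((\sum_(0 <= j < m) g j + M * powR delta r)%:E)); last exact: ltry.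
apply: ge_ereal_sup => _ [n _ <-] /=.
rewrite sumEFin lee_fin.
have H1 : \sum_(0 <= i < n) g i <= \sum_(0 <= j < (m + n)%N) g j.
  rewrite (big_cat_nat (leq0n n) (leq_addl m n)) /= lerDl.
  by apply: sumr_ge0 => i _; exact: Hg0.
apply: (le_trans H1).
rewrite shift_sum lerD2l.
exact: Hb.
Qed.
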